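(* Let $T=(T,\eta,\mu)$ be a Kock–Zöberlein monad on a poset-enriched category $\mathcal{A}$. Let $a\colon T(X)\to X$ be a $T$-algebra, $c\colon X\to T(X)$ a $\overline{T}$-coalgebra on $a$, and $b\colon T(X)\to X$ a map satisfying $a\circ T(b)=b\circ\mu_X$ (so $b$ is an algebra map $\mu_X\to a$) and $c\circ b=T(b)\circ T(\eta_X)$ (so $b$ is a coalgebra map from $T(\eta_X)$ to $c$). Then the following are equivalent: (1) $b$ is an algebra of the monad $\overline{\overline{T}}$ on $c$, i.e. $b\circ c=\mathrm{id}_X$ and $b\circ T(b)=b\circ T(a)$; (2) $b\circ c=\mathrm{id}_X$ and $\mathrm{id}_{T(X)}\le c\circ b$, i.e. $b$ is a left adjoint left inverse of $c$ (a reflection $b\dashv c$).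
   Context: Poset-enriched category: hom-posets, monotone composition; $f\dashv g$ means $\mathrm{id}\le g\circ f$, $f\circ g\le\mathrm{id}$. Kock–Zöberlein monad: monotone on hom-posets and $T(\eta_X)\le\eta_{T(X)}$. $\overline{T}$ is the comonad on $T$-algebras with $\overline{T}(a)=\mu_X$, counit $a$, comultiplication $T(\eta_X)$; a $\overline{T}$-coalgebra on $a\colon TX\to X$ is $c\colon X\to TX$ with $c\circ a=\mu_X\circ T(c)$, $a\circ c=\mathrm{id}$, $T(\eta_X)\circ c=T(c)\circ c$. The forgetful functor from $\overline{T}$-coalgebras to $T$-algebras has a right adjoint sending an algebra on $Y$ to the coalgebra $T(\eta_Y)$ on $\mu_Y$; this induces a monad $\overline{\overline{T}}$ on $\overline{T}$-coalgebras with $\overline{\overline{T}}(c)=T(\eta_X)$ (on the algebra $\mu_X$), unit $c\colon c\to\overline{\overline{T}}(c)$, multiplication $T(a)$, and $\overline{\overline{T}}(b)=T(b)$ on morphisms. *)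

(* Defs.v *)
Set Implicit Arguments.
Unset Strict Implicit.

Record PosetCat := {
  Obj :> Type;
  Hom : Obj -> Obj -> Type;
  idm : forall A, Hom A A;
  comp : forall A B C, Hom B C -> Hom A B -> Hom A C;
  hle : forall A B, Hom A B -> Hom A B -> Prop;
  comp_id_l : forall A B (f : Hom A B), comp (idm B) f = f;
  comp_id_r : forall A B (f : Hom A B), comp f (idm A) = f;
  comp_assoc : forall A B C D (h : Hom C D) (g : Hom B C) (f : Hom A B),
      comp h (comp g f) = comp (comp h g) f;
  hle_refl : forall A B (f : Hom A B), hle f f;
  hle_trans : forall A B (f g h : Hom A B), hle f g -> hle g h -> hle f h;
  hle_antisym : forall A B (f g : Hom A B), hle f g -> hle g f -> f = g;
  comp_mono : forall A B C (g g' : Hom B C) (f f' : Hom A B),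
      hle g g' -> hle f f' -> hle (comp g f) (comp g' f')
}.

Arguments idm {_} A.
Arguments comp {_ A B C} g f.
Arguments hle {_ A B} f g.

Notation "g \o f" := (comp g f) (at level 40, left associativity).

Record Monad (C : PosetCat) := {
  T0 : C -> C;
  T1 : forall A B, Hom A B -> Hom (T0 A) (T0 B);
  T_id : forall A, T1 (idm A) = idm (T0 A);
  T_comp : forall A B D (g : Hom B D) (f : Hom A B),
      T1 (g \o f) = T1 g \o T1 f;
  T_mono : forall A B (f g : Hom A B), hle f g -> hle (T1 f) (T1 g);
  eta : forall A, Hom A (T0 A);
  mu : forall A, Hom (T0 (T0 A)) (T0 A);
  eta_nat : forall A B (f : Hom A B), T1 f \o eta A = eta B \o f;
  mu_nat : forall A B (f : Hom A B), T1 f \o mu A = mu B \o T1 (T1 f);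
  mu_eta_l : forall A, mu A \o eta (T0 A) = idm (T0 A);
  mu_eta_r : forall A, mu A \o T1 (eta A) = idm (T0 A);
  mu_assoc : forall A, mu A \o T1 (mu A) = mu A \o mu (T0 A)
}.

Arguments T0 {_} m A.
Arguments T1 {_} m {A B} f.
Arguments eta {_} m A.
Arguments mu {_} m A.

(* Kock–Zöberlein: T(eta_X) <= eta_{T X} (monotonicity is built into Monad). *)
Definition KZ (C : PosetCat) (T : Monad C) : Prop :=
  forall X, hle (T1 T (eta T X)) (eta T (T0 T X)).

Definition is_algebra (C : PosetCat) (T : Monad C) (X : C)
    (a : Hom (T0 T X) X) : Prop :=
  a \o eta T X = idm X /\ a \o T1 T a = a \o mu T X.

Definition is_Tbar_coalgebra (C : PosetCat) (T : Monad C) (X : C)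
    (a : Hom (T0 T X) X) (c : Hom X (T0 T X)) : Prop :=
  c \o a = mu T X \o T1 T c /\
  a \o c = idm X /\
  T1 T (eta T X) \o c = T1 T c \o c.

Arguments KZ {C} T.
Arguments is_algebra {C} T X a.
Arguments is_Tbar_coalgebra {C} T X a c.

(* Main.v *)
Require Import Defs.

Lemma mono_l (C : PosetCat) (A B D : C) (g : Hom B D) (f f' : Hom A B) :
  hle f f' -> hle (g \o f) (g \o f').
Proof. intro H. apply comp_mono; [apply hle_refl | exact H]. Qed.

Lemma mono_r (C : PosetCat) (A B D : C) (g g' : Hom B D) (f : Hom A B) :
  hle g g' -> hle (g \o f) (g' \o f).
Proof. intro H. apply comp_mono; [exact H | apply hle_refl]. Qed.

Theorem lemma4p3 (C : PosetCat) (T : Monad C) (HKZ : KZ T) (X : C)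
    (a : Hom (T0 T X) X) (Ha : is_algebra T X a)
    (c : Hom X (T0 T X)) (Hc : is_Tbar_coalgebra T X a c)
    (b : Hom (T0 T X) X)
    (Hb_alg : a \o T1 T b = b \o mu T X)
    (Hb_coalg : c \o b = T1 T b \o T1 T (eta T X)) :
  (b \o c = idm X /\ b \o T1 T b = b \o T1 T a) <->
  (b \o c = idm X /\ hle (idm (T0 T X)) (c \o b)).
Proof.
  destruct Ha as [Ha1 Ha2]. destruct Hc as [Hc1 [Hc2 Hc3]].
  assert (Hea : hle (idm (T0 T X)) (eta T X \o a)).
  { rewrite <- eta_nat.
    replace (idm (T0 T X)) with (T1 T a \o T1 T (eta T X))
      by (rewrite <- T_comp, Ha1; apply T_id).
    apply mono_l. apply HKZ. }
  split.
  - intros [Hbc _]. split; [exact Hbc|].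
    assert (Hce : hle c (eta T X)).
    { apply hle_trans with (T1 T a \o T1 T c \o c).
      { rewrite <- T_comp, Hc2, T_id, comp_id_l. apply hle_refl. }
      rewrite <- comp_assoc, <- Hc3, comp_assoc.
      apply hle_trans with (T1 T a \o eta T (T0 T X) \o c).
      { apply mono_r. apply mono_l. apply HKZ. }
      rewrite eta_nat, <- comp_assoc, Hc2, comp_id_r. apply hle_refl. }
    rewrite Hb_coalg, <- T_comp, <- (T_id T X), <- Hbc.
    apply T_mono. apply mono_l. exact Hce.
  - intros [Hbc Hle]. split; [exact Hbc|].
    apply hle_antisym.
    + apply hle_trans with (b \o (c \o b \o T1 T a)).
      * apply mono_l. rewrite Hb_coalg, <- !T_comp. apply T_mono.
        rewrite <- comp_assoc.
        apply hle_trans with (b \o idm _).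
        { rewrite comp_id_r. apply hle_refl. }
        apply mono_l. exact Hea.
      * rewrite !comp_assoc, Hbc, comp_id_l. apply hle_refl.
    + apply hle_trans with (b \o T1 T a \o T1 T (c \o b)).
      * apply hle_trans with (b \o T1 T a \o idm _).
        { rewrite comp_id_r. apply hle_refl. }
        apply mono_l. rewrite <- (T_id T (T0 T X)). apply T_mono. exact Hle.
      * rewrite <- comp_assoc, <- T_comp, comp_assoc, Hc2, comp_id_l.
        apply hle_refl.
Qed.
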